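(* In the Quantum variation of single-heap Nim under Ruleset A, Ruleset B or Ruleset D, the value of a superposition $\langle \mathrm{Nim}(i_1),\ldots,\mathrm{Nim}(i_\ell)\rangle$ of single Nim heaps depends only on $\max_j i_j$; i.e. two such superpositions with the same largest heap size are equivalent.
   Context: Nim: $\mathrm{Nim}(x_1,\ldots,x_k)$ is the position with heaps of $x_1,\ldots,x_k$ tokens; the classical move $(i,-j)$ with $j\ge1$ removes $j$ tokens from heap $i$ and is illegal if heap $i$ has fewer than $j$ tokens; normal play. Quantum variation: a position is a nonempty finite set $\langle G_1,\ldots,G_n\rangle$ of classical positions. A classical move $m$ is legal if legal in some $G_i$. A Q-move is a nonempty set $\{m_1,\ldots,m_k\}$ of legal classical moves, leading to the set of all $\Gamma(G_i,m_j)$ that are legal results. Ruleset A: only Q-moves with at least two classical moves allowed. Ruleset B: same, except when the player has exactly one legal classical move overall he may play it alone. Ruleset D: all Q-moves allowed. The player with no allowed Q-move loses. $G\equiv H$ means $G+X$ and $H+X$ have the same outcome for every game $X$ (disjunctive sum); the value of a game is its equivalence class. *)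

(* Defs.v *)
From mathcomp Require Import all_boot.
Set Implicit Arguments. Unset Strict Implicit. Unset Printing Implicit Defensive.

Inductive igame : Type := IG of seq igame.

Fixpoint gsum (g h : igame) {struct g} : igame :=
  match g with
  | IG gs =>
      (fix aux (h : igame) : igame :=
         match h with
         | IG hs => IG (map (fun g' => gsum g' h) gs ++ map aux hs)
         end) h
  end.

Fixpoint fpwin (g : igame) : bool :=
  match g with IG gs => has (fun g' => ~~ fpwin g') gs end.

Definition gequiv (G H : igame) : Prop :=
  forall X : igame, fpwin (gsum G X) = fpwin (gsum H X).

(* A quantum position <Nim(i_1),...,Nim(i_l)> is represented by the
   (nonempty) list of heap sizes [:: i_1; ...; i_l]; order and
   duplicates are irrelevant (it stands for a set). *)
Definition qmax (P : seq nat) : nat := \max_(i <- P) i.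

(* The classical move "remove j tokens" (j >= 1) is legal in the quantum
   position P iff it is legal in some Nim(i), i in P, i.e. 1 <= j <= qmax P.
   A Q-move is a nonempty set S of legal classical moves; it is represented
   by a subsequence of iota 1 (qmax P) (hence duplicate-free). *)
Fixpoint subseqs (s : seq nat) : seq (seq nat) :=
  match s with
  | [::] => [:: [::]]
  | x :: s' => let r := subseqs s' in map (cons x) r ++ r
  end.

Definition qresult (P S : seq nat) : seq nat :=
  flatten [seq [seq i - j | j <- S & j <= i] | i <- P].

Inductive ruleset := RulesetA | RulesetB | RulesetD.

Definition allowed (r : ruleset) (P S : seq nat) : bool :=
  match r with
  | RulesetA => 1 < size S
  | RulesetB => (1 < size S) || ((size S == 1) && (qmax P == 1))
      (* qmax P == 1 <-> exactly one legal classical move (remove 1) *)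
  | RulesetD => 0 < size S
  end.

(* Game tree of a quantum position, with fuel (any fuel > qmax P is
   enough since every Q-move strictly decreases qmax). *)
Fixpoint qgame_fuel (r : ruleset) (n : nat) (P : seq nat) : igame :=
  match n with
  | 0 => IG [::]
  | n'.+1 =>
      IG [seq qgame_fuel r n' (qresult P M)
         | M <- subseqs (iota 1 (qmax P)) & allowed r P M]
  end.

Definition qgame (r : ruleset) (P : seq nat) : igame :=
  qgame_fuel r (qmax P).+1 P.

(* Main.v *)
Require Import Defs.
From mathcomp Require Import all_boot.

Definition gq (M : seq nat) (m : nat) := \max_(j <- M | j <= m) (m - j).

Lemma gq_mono M a b : a <= b -> gq M a <= gq M b.
Proof.
move=> ab; apply/bigmax_leqP_seq => j jM ja.
apply: (leq_trans (leq_sub2r j ab)).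
apply: (@leq_bigmax_seq _ M (fun j => j <= b) (fun j => b - j) j jM) => /=.
exact: leq_trans ja ab.
Qed.

Lemma gq_max M a b : maxn (gq M a) (gq M b) = gq M (maxn a b).
Proof.
case: (leqP a b) => ab.
  have h := @gq_mono M _ _ ab.
  by rewrite (maxn_idPr h); congr gq; apply/esym/maxn_idPr.
have h := @gq_mono M _ _ (ltnW ab).
by rewrite (maxn_idPl h); congr gq; apply/esym/maxn_idPl; exact: ltnW.
Qed.

Lemma qmax_qresult P M : qmax (qresult P M) = gq M (qmax P).
Proof.
elim: P => [|a P IH].
  rewrite /qmax /gq /qresult /= big_nil big1_seq //.
have -> : qresult (a :: P) M = [seq a - j | j <- M & j <= a] ++ qresult P M by [].
rewrite /qmax big_cat /= -/(qmax (qresult P M)) IH big_cons big_map big_filter.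
by rewrite -gq_max.
Qed.

Lemma qgame_fuel_max r n P Q : qmax P = qmax Q -> qgame_fuel r n P = qgame_fuel r n Q.
Proof.
elim: n P Q => [//|n IH] P Q e /=.
have hall : forall M, allowed r P M = allowed r Q M.
  by move=> M; case: (r) => //=; rewrite e.
rewrite e; congr IG.
have -> : [seq x <- subseqs (iota 1 (qmax Q)) | allowed r P x] =
          [seq x <- subseqs (iota 1 (qmax Q)) | allowed r Q x].
  by apply: eq_filter => M; exact: hall.
apply: eq_map => M; apply: IH; by rewrite !qmax_qresult e.
Qed.

Theorem corollary1 (r : ruleset) (P Q : seq nat) :
  P != [::] -> Q != [::] ->
  \max_(i <- P) i = \max_(i <- Q) i ->
  gequiv (qgame r P) (qgame r Q).
Proof.
move=> _ _ e X.
have e' : qmax P = qmax Q by [].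
by rewrite /qgame e' (@qgame_fuel_max r _ P Q e').
Qed.
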